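(* Let $N\ge1$ and let $\mathcal{A}=\prod_{n=1}^N\mathcal{A}_n$ be a finite set of reservation vectors. Let $C(a,b)=C_R(a)+C_V(a,b)+C_T(a,b)$ be the total cost of reservation $a\in\mathcal{A}$ under job request vector $b$, and assume there is $\Theta>0$ such that $|C_R(a)|\le\Theta$, $|C_T(a,b)|\le\Theta$ and $|C_V(a,b)|\le\Theta$ for all reservations $a\in\mathcal{A}$ and all job request vectors $b$. Fix a horizon $T>0$, take $\eta=\sqrt{\log|\mathcal{A}|/T}$, and let $b^1,\dots,b^T$ be any sequence of job request vectors. Run the exponentially weighted strategy: at each $t=1,\dots,T$ the reservation $A^t$ is drawn at random (independently given the past draws) from the distribution $P^t$ on $\mathcal{A}$ given by $$w^t(a)=\exp\Big\{-\eta\sum_{s=1}^{t-1}C(a,b^s)\Big\},\qquad P^t_a=\frac{w^t(a)}{\sum_{a'\in\mathcal{A}}w^t(a')}.$$ Define the regret $R_T=\sum_{t=1}^TC(A^t,b^t)-\min_{a\in\mathcal{A}}\sum_{t=1}^TC(a,b^t)$. Then for any $0<\delta<1$, with probability at least $1-\delta$, $$R_T\le\Big(\frac{9\Theta^2}{8}+1\Big)\sqrt{T\log|\mathcal{A}|}+3\Theta\sqrt{\tfrac12\log(\delta^{-1})\,T}.$$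
   Context: Setting: a network of $N$ servers; at each time slot $t$ an administrator chooses a reservation vector $a=(a_1,\dots,a_N)\in\mathcal{A}$ (with $\mathcal{A}_n$ the finite set of possible reservation levels at server $n$) before observing the job requests $b=(b_1,\dots,b_N)$; jobs may then be transferred between servers. With positive functions $f^R_n,f^V_n,f^T_{n,m}$, the costs are $C_R(a)=\sum_{n}f^R_n(a_n)$, $C_V(a,b)=\sum_n f^V_n\big(b_n-a_n-\sum_{m}\delta_{n,m}\big)$, $C_T(a,b)=\sum_n\sum_{m\ne n}f^T_{n,m}(\delta_{n,m})$, where the transfer amounts $\delta_{n,m}=\delta_{n,m}(a,b)$ are an optimal solution of $\min\sum_n\big(\sum_{m\ne n}f^T_{n,m}(\delta_{n,m})+f^V_n(b_n-a_n-\sum_{m\ne n}\delta_{n,m})\big)$ subject to $\delta_{n,m}\le\min\{(b_n-a_n)^+,(a_m-b_m)^+\}$ for all $n\ne m$. The probability is over the random draws $A^1,\dots,A^T$. *)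

(* Defs.v *)
From HB Require Import structures.
From mathcomp Require Import all_boot all_order all_algebra.
From mathcomp Require Import finmap.
From mathcomp Require Import reals sequences exp.
Set Implicit Arguments. Unset Strict Implicit. Unset Printing Implicit Defensive.
Import Order.TTheory GRing.Theory Num.Theory.
Local Open Scope ring_scope.
Local Open Scope fset_scope.

Section Network.
Variables (R : realType) (N : nat).

Variable Alev : 'I_N -> {fset R}.

Definition Act : finType := {dffun forall n : 'I_N, Alev n}.

Definition aval (a : Act) : 'I_N -> R := fun n => fsval (a n).

Variables (fR fV : 'I_N -> R -> R) (fT : 'I_N -> 'I_N -> R -> R).

Definition feasible (a b : 'I_N -> R) (d : 'I_N -> 'I_N -> R) : Prop :=
  forall n m : 'I_N, n != m ->
    d n m <= Num.min (Num.max (b n - a n) 0) (Num.max (a m - b m) 0).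

Definition transfer_obj (a b : 'I_N -> R) (d : 'I_N -> 'I_N -> R) : R :=
  \sum_(n < N) (\sum_(m < N | m != n) fT n m (d n m)
                + fV n (b n - a n - \sum_(m < N | m != n) d n m)).

Definition optimal_transfer (a b : 'I_N -> R) (d : 'I_N -> 'I_N -> R) : Prop :=
  feasible a b d /\ forall d', feasible a b d' -> transfer_obj a b d <= transfer_obj a b d'.

(* a selection delta(a,b) of optimal transfers *)
Variable delta : ('I_N -> R) -> ('I_N -> R) -> 'I_N -> 'I_N -> R.

Definition CR (a : Act) : R := \sum_(n < N) fR n (aval a n).
Definition CV (a : Act) (b : 'I_N -> R) : R :=
  \sum_(n < N) fV n (b n - aval a n - \sum_(m < N | m != n) delta (aval a) b n m).
Definition CT (a : Act) (b : 'I_N -> R) : R :=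
  \sum_(n < N) \sum_(m < N | m != n) fT n m (delta (aval a) b n m).
Definition Cost (a : Act) (b : 'I_N -> R) : R := CR a + CV a b + CT a b.

Definition finmin (T : finType) (F : T -> R) : R :=
  if [pick a : T] is Some a0 then \big[Num.min/F a0]_(a : T) F a else 0.

Variables (T : nat) (bs : 'I_T -> ('I_N -> R)) (eta : R).
(* time t : 'I_T stands for round t+1 *)

Definition weight (t : 'I_T) (a : Act) : R :=
  expR (- eta * \sum_(s < T | (s < t)%N) Cost a (bs s)).

Definition Pdist (t : 'I_T) (a : Act) : R := weight t a / \sum_(a' : Act) weight t a'.

Definition regret (x : {ffun 'I_T -> Act}) : R :=
  \sum_(t < T) Cost (x t) (bs t) - finmin (fun a : Act => \sum_(t < T) Cost a (bs t)).

(* joint law of the draws: A^t drawn from P^t independently given the past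
   (P^t depends only on the fixed sequence b, so the law is a product) *)
Definition Prob (E : pred {ffun 'I_T -> Act}) : R :=
  \sum_(x : {ffun 'I_T -> Act} | E x) \prod_(t < T) Pdist t (x t).

End Network.

(* Main.v *)
Require Import Defs.
From HB Require Import structures.
From mathcomp Require Import all_boot all_order all_algebra.
From mathcomp Require Import finmap.
From mathcomp Require Import reals sequences exp.
From mathcomp Require Import boolp classical_sets functions interval_inference topology normedtype derive realfun convex.
From mathcomp Require Import ring lra.
Import Order.TTheory GRing.Theory Num.Theory.
Import numFieldNormedType.Exports.
Local Open Scope ring_scope.

Lemma mono_der (R : realType) (f f' : R -> R) (a b : R) :
  (forall x : R, is_derive x (1:R) f (f' x)) -> (forall x, a < x < b -> 0 <= f' x) ->
  a <= b -> f a <= f b.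
Proof.
move=> df hf ab.
apply: (@ger0_derive1_ndecr R f a b) => //.
- move=> x; rewrite in_itv /= => hx; rewrite derive1E; have [_ ->] := df x; exact: hf.
- by apply: derivable_within_continuous => x _; case: (df x).
Qed.



Lemma mono_der_neg (R : realType) (f f' : R -> R) (a b : R) :
  (forall x : R, is_derive x (1:R) f (f' x)) -> (forall x, a < x < b -> f' x <= 0) ->
  a <= b -> f b <= f a.
Proof.
move=> df hf ab.
apply: (@ler0_derive1_nincr R f a b) => //.
- move=> x; rewrite in_itv /= => hx; rewrite derive1E; have [_ ->] := df x; exact: hf.
- by apply: derivable_within_continuous => x _; case: (df x).
Qed.

Section Hoeff.
Variable R : realType.

Lemma Dpos (q h : R) : 0 <= q -> q <= 1 -> 0 < 1 - q + q * expR h.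
Proof.
move=> q0 q1.
have := expR_gt0 h => eh.
have [e1|e1] := lerP 1 (expR h).
  have : 0 <= q * (expR h - 1) by apply: mulr_ge0; lra.
  lra.
have : 0 <= (1 - q) * (1 - expR h) by apply: mulr_ge0; lra.
lra.
Qed.

Lemma dk (q x : R) : 1 - q + q * expR x != 0 ->
  is_derive x (1:R) (fun h => q + h/4 - q * expR h / (1 - q + q * expR h))
     ((2^-1 - q * expR x / (1 - q + q * expR x))^+2).
Proof.
move=> hD.
have Hd := is_deriveB (is_deriveD (is_derive_cst q x 1) (is_deriveZ (4^-1) (is_derive_id x (1:R))))
   (is_deriveM (is_deriveZ q (is_derive_expR x)) (@is_deriveV R (cst (1 - q) + q \*: expR) x _ _ hD (is_deriveD (is_derive_cst (1-q) x 1) (is_deriveZ q (is_derive_expR x))))).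
have E : (cst q + 4^-1 \*: id - q \*: expR * (fun y => ((cst (1 - q) + q \*: expR) y)^-1)) =
   (fun h : R => q + h/4 - q * expR h / (1 - q + q * expR h)).
  apply/funext => h /=. rewrite !fctE /=.
  change (q + 4^-1 * h - q * expR h / (1 - q + q * expR h) = q + h / 4 - q * expR h / (1 - q + q * expR h)).
  by rewrite [4^-1 * h]mulrC.
rewrite E in Hd.
apply: is_derive_eq Hd _.
rewrite /= !fctE /=.
change (0 + 4^-1 * 1 - (q * expR x * (- (1 - q + q * expR x) ^- 2 * (0 + q * expR x)) + (1 - q + q * expR x)^-1 * (q * expR x))
  = (2^-1 - q * expR x / (1 - q + q * expR x)) ^+ 2).
by field.
Qed.

Lemma dg (q x : R) : 0 < 1 - q + q * expR x ->
  is_derive x (1:R) (fun h => q * h + h^+2/8 - ln (1 - q + q * expR h))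
     (q + x/4 - q * expR x / (1 - q + q * expR x)).
Proof.
move=> hD.
have Hd := is_deriveB (is_deriveD (is_deriveZ q (is_derive_id x (1:R))) (is_deriveZ (8^-1) (is_deriveM (is_derive_id x (1:R)) (is_derive_id x (1:R)))))
   (@is_derive1_comp R (@ln R) (cst (1 - q) + q \*: expR) x _ _ (@is_derive1_ln R _ hD) (is_deriveD (is_derive_cst (1-q) x 1) (is_deriveZ q (is_derive_expR x)))).
have E : (q \*: id + 8^-1 \*: (id * id) - ((@ln R) \o (cst (1 - q) + q \*: expR))) =
   (fun h : R => q * h + h^+2/8 - ln (1 - q + q * expR h)).
  apply/funext => h /=. rewrite !fctE /=.
  change (q * h + 8^-1 * (h * h) - ln (1 - q + q * expR h) = q * h + h^+2/8 - ln (1 - q + q * expR h)).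
  by rewrite [8^-1 * _]mulrC expr2.
rewrite E in Hd.
apply: is_derive_eq Hd _.
rewrite /=.
change (q * 1 + 8^-1 * (x * 1 + x * 1) - (1 - q + q * expR x)^-1 * (0 + q * expR x)
  = q + x/4 - q * expR x / (1 - q + q * expR x)).
have hD' : 1 - q + q * expR x != 0 by rewrite gt_eqF.
by field.
Qed.

Lemma hoeff_core (q h : R) : 0 <= q -> q <= 1 ->
  1 - q + q * expR h <= expR (q * h + h^+2/8).
Proof.
move=> q0 q1.
pose k := fun h : R => q + h/4 - q * expR h / (1 - q + q * expR h).
pose g := fun h : R => q * h + h^+2/8 - ln (1 - q + q * expR h).
have kmono : forall a b, a <= b -> k a <= k b.
  move=> a b ab.
  have dk' : forall y : R, is_derive y (1:R) k ((2^-1 - q * expR y / (1 - q + q * expR y))^+2).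
    by move=> y; exact: (dk q y (lt0r_neq0 (Dpos q y q0 q1))).
  apply: (@mono_der R k (fun y => (2^-1 - q * expR y / (1 - q + q * expR y))^+2) a b dk' _ ab) => y _; exact: sqr_ge0.
have dg' : forall y : R, is_derive y (1:R) g (k y).
  by move=> y; exact: (dg q y (Dpos q y q0 q1)).
have k0 : k 0 = 0 by rewrite /k expR0 mulr1; field; lra.
have g0 : g 0 = 0 by rewrite /g expR0 mulr1 mulr0 expr0n /= mul0r addr0 subrK ln1 subr0.
suff : g 0 <= g h.
  rewrite g0 /g subr_ge0 => H.
  rewrite -[leLHS]lnK; first by rewrite ler_expR.
  by rewrite posrE Dpos.
have [h0|h0] := lerP 0 h.
  apply: (@mono_der R g k 0 h dg' _ h0).
  by move=> y /andP[y0 _]; rewrite -k0; apply: kmono; apply: ltW.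
apply: (@mono_der_neg R g k h 0 dg' _ (ltW h0)).
by move=> y /andP[_ y0]; rewrite -k0; apply: kmono; apply: ltW.
Qed.

End Hoeff.

Lemma cvx (R : realType) (s h : R) : 0 <= s -> s <= 1 -> expR (s * h) <= 1 - s + s * expR h.
Proof.
move=> s0 s1.
have := @convex_expR R (Itv01 s0 s1) h 0.
rewrite !convRE /= expR0 mulr0 mulr1 addr0 /unstable.onem. lra.
Qed.

Lemma hoeffding_fin (R : realType) (T : finType) (P c : T -> R) (M lam : R) :
  0 < M -> (forall a, 0 <= P a) -> \sum_a P a = 1 -> (forall a, 0 <= c a <= M) ->
  \sum_a P a * expR (lam * (c a - \sum_b P b * c b)) <= expR (lam^+2 * M^+2 / 8).
Proof.
move=> M0 P0 P1 cM.
set p := \sum_b P b * c b.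
have p0 : 0 <= p by apply: sumr_ge0 => a _; apply: mulr_ge0 => //; case/andP: (cM a).
have pM : p <= M.
  rewrite -[leRHS]mul1r -P1 mulr_suml; apply: ler_sum => a _.
  by apply: ler_wpM2l => //; case/andP: (cM a).
have M0' : M != 0 by rewrite gt_eqF.
set E := expR (lam * M).
have step1 : \sum_a P a * expR (lam * (c a - p)) = expR (- (lam * p)) * \sum_a P a * expR (lam * c a).
  rewrite mulr_sumr; apply: eq_bigr => a _.
  by rewrite mulrBr expRD; ring.
have step2 : \sum_a P a * expR (lam * c a) <= \sum_a P a * (1 - c a / M + c a / M * E).
  apply: ler_sum => a _; apply: ler_wpM2l => //.
  have [ca0 caM] := andP (cM a).
  have -> : lam * c a = (c a / M) * (lam * M) by field.
  apply: cvx; first by apply: divr_ge0 => //; apply: ltW.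
  by rewrite ler_pdivrMr // mul1r.
have step3 : \sum_a P a * (1 - c a / M + c a / M * E) = 1 - p / M + p / M * E.
  transitivity (\sum_a (P a + (P a * c a) * ((E - 1) / M))).
    by apply: eq_bigr => a _; field.
  by rewrite big_split /= P1 -mulr_suml -/p; field.
have q0 : 0 <= p / M by apply: divr_ge0 => //; apply: ltW.
have q1 : p / M <= 1 by rewrite ler_pdivrMr // mul1r.
have step4 := @hoeff_core R (p / M) (lam * M) q0 q1.
rewrite step1.
apply: (le_trans (ler_wpM2l (expR_ge0 _) step2)).
rewrite step3.
apply: (le_trans (ler_wpM2l (expR_ge0 _) step4)).
rewrite -expRD.
have -> : (- (lam * p) + (p / M * (lam * M) + (lam * M) ^+ 2 / 8)) = lam ^+ 2 * M ^+ 2 / 8 by field.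
by [].
Qed.

Lemma sum_ltS (R : realType) (T : nat) (f : 'I_T -> R) (t : 'I_T) :
  \sum_(s < T | (s < t.+1)%N) f s = \sum_(s < T | (s < t)%N) f s + f t.
Proof.
rewrite (bigD1 t) //= addrC; congr (_ + _).
apply: eq_bigl => s; rewrite ltnS.
by rewrite andbC -ltn_neqAle.
Qed.

Section Generic.
Variables (R : realType) (A : finType) (T : nat) (c : 'I_T -> A -> R) (M eta : R).
Hypothesis M0 : 0 < M.
Hypothesis cM : forall t a, 0 <= c t a <= M.
Variable a0 : A.

Definition Lg (k : nat) a := \sum_(s < T | (s < k)%N) c s a.
Definition Wg (k : nat) := \sum_a expR (- eta * Lg k a).
Definition Pg (t : 'I_T) a := expR (- eta * Lg t a) / Wg t.
Definition pg (t : 'I_T) := \sum_a Pg t a * c t a.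

Lemma Wg_gt0 k : 0 < Wg k.
Proof.
rewrite /Wg (bigD1 a0) //=; apply: ltr_pwDl; first exact: expR_gt0.
by apply: sumr_ge0 => a _; apply: expR_ge0.
Qed.

Lemma Pg_ge0 t a : 0 <= Pg t a.
Proof. by apply: divr_ge0; [apply: expR_ge0 | apply: ltW; apply: Wg_gt0]. Qed.

Lemma Pg_sum t : \sum_a Pg t a = 1.
Proof.
rewrite /Pg -mulr_suml -/(Wg t) divff //.
by apply: lt0r_neq0; apply: Wg_gt0.
Qed.

Lemma Wg_S (t : 'I_T) : Wg t.+1 <= Wg t * expR (- eta * pg t + eta^+2 * M^+2 / 8).
Proof.
have H := @hoeffding_fin R A (Pg t) (c t) M (- eta) M0 (Pg_ge0 t) (Pg_sum t) (cM t).
have -> : Wg t.+1 = Wg t * \sum_a Pg t a * expR (- eta * c t a).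
  rewrite mulr_sumr /Wg; apply: eq_bigr => a _.
  rewrite /Lg sum_ltS -/(Lg t a) /Pg mulrA mulrCA divff; last exact: lt0r_neq0 (Wg_gt0 t).
  by rewrite mulr1 mulrDr expRD.
apply: ler_wpM2l; first exact: ltW (Wg_gt0 t).
rewrite expRD -/(pg t) sqrrN in H *.
apply: le_trans (_ : expR (- eta * pg t) * \sum_a Pg t a * expR (- eta * (c t a - pg t)) <= _).
  rewrite mulr_sumr le_eqVlt; apply/orP; left; apply/eqP; apply: eq_bigr => a _.
  have e0 : expR (- eta * pg t) != 0 by apply: lt0r_neq0; apply: expR_gt0.
  by rewrite mulrBr expRD expRN; field.
by apply: ler_wpM2l => //; apply: expR_ge0.
Qed.

Lemma Wg_iter k : (k <= T)%N ->
  Wg k <= Wg 0 * expR (\sum_(t < T | (t < k)%N) (- eta * pg t + eta^+2 * M^+2 / 8)).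
Proof.
elim: k => [_|k IH hk].
  by rewrite big1 ?expR0 ?mulr1 // => i; rewrite ltn0.
have hk' : (k < T)%N by [].
pose t := Ordinal hk'.
have -> : Wg k.+1 = Wg t.+1 by [].
apply: le_trans (Wg_S t) _.
have -> : \sum_(t0 < T | (t0 < k.+1)%N) (- eta * pg t0 + eta ^+ 2 * M ^+ 2 / 8) =
   \sum_(t0 < T | (t0 < t.+1)%N) (- eta * pg t0 + eta ^+ 2 * M ^+ 2 / 8) by [].
rewrite sum_ltS (expRD (\sum_(s < T | (s < t)%N) _)) mulrA.
apply: ler_wpM2r; first exact: expR_ge0.
exact: IH (ltnW hk).
Qed.

Lemma Wg0 : Wg 0 = #|A|%:R.
Proof.
rewrite /Wg (eq_bigr (fun _ => 1)); first by rewrite sumr_const.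
move=> a _; rewrite /Lg big1 ?mulr0 ?expR0 // => i; by rewrite ltn0.
Qed.

Lemma LgT a : Lg T a = \sum_t c t a.
Proof. by apply: eq_bigl => i; rewrite ltn_ord. Qed.

Lemma hedge a : eta * (\sum_t pg t - \sum_t c t a) <= ln (#|A|%:R) + T%:R * (eta^+2 * M^+2 / 8).
Proof.
have h1 : expR (- eta * Lg T a) <= Wg T.
  rewrite /Wg (bigD1 a) //= lerDl.
  by apply: sumr_ge0 => b _; apply: expR_ge0.
have h2 := Wg_iter T (leqnn T).
have hA : (0 < #|A|)%N by apply/card_gt0P; exists a0.
have hA' : 0 < (#|A|%:R : R) by rewrite ltr0n.
rewrite Wg0 -[X in X * _]lnK ?posrE // -expRD in h2.
have := le_trans h1 h2; rewrite ler_expR LgT.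
have eT : forall f : 'I_T -> R, \sum_(t < T | (t < T)%N) f t = \sum_t f t.
  by move=> f; apply: eq_bigl => i; rewrite ltn_ord.
rewrite eT.
rewrite big_split /= -mulr_sumr sumr_const card_ord -mulr_natl.
lra.
Qed.

Lemma conc (lam eps : R) : 0 < lam ->
  \sum_(x : {ffun 'I_T -> A} | eps < \sum_t c t (x t) - \sum_t pg t) \prod_t Pg t (x t)
  <= expR (- (lam * eps) + T%:R * (lam^+2 * M^+2 / 8)).
Proof.
move=> l0.
pose S := fun x : {ffun 'I_T -> A} => \sum_t c t (x t) - \sum_t pg t.
pose F := fun x : {ffun 'I_T -> A} => \prod_t Pg t (x t).
have F0 : forall x, 0 <= F x by move=> x; apply: prodr_ge0 => t _; apply: Pg_ge0.
apply: (@le_trans _ _ (\sum_x F x * expR (lam * (S x - eps)))).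
  rewrite [X in _ <= X](bigID (fun x => eps < S x)) /=.
  rewrite -[leLHS]addr0; apply: lerD.
    apply: ler_sum => x hx; rewrite -[leLHS]mulr1; apply: ler_wpM2l; first exact: F0.
    rewrite -expR0 ler_expR; apply: mulr_ge0; first exact: ltW.
    rewrite /S; lra.
  by apply: sumr_ge0 => x _; apply: mulr_ge0; [exact: F0 | exact: expR_ge0].
have E1 : forall x, F x * expR (lam * (S x - eps)) =
    expR (- (lam * eps)) * \prod_t (Pg t (x t) * expR (lam * (c t (x t) - pg t))).
  move=> x; rewrite big_split /= -expR_sum.
  have -> : \sum_t lam * (c t (x t) - pg t) = lam * S x by rewrite -mulr_sumr sumrB.
  rewrite -/(F x) mulrBr expRD; ring.
rewrite (eq_bigr _ (fun x _ => E1 x)) -mulr_sumr.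
rewrite -(bigA_distr_bigA (fun t a => Pg t a * expR (lam * (c t a - pg t)))).
rewrite expRD; apply: ler_wpM2l; first exact: expR_ge0.
have -> : T%:R * (lam ^+ 2 * M ^+ 2 / 8) = \sum_(t < T) (lam ^+ 2 * M ^+ 2 / 8).
  by rewrite sumr_const card_ord mulr_natl.
rewrite expR_sum; apply: ler_prod => t _; apply/andP; split.
  by apply: sumr_ge0 => a _; apply: mulr_ge0; [exact: Pg_ge0 | exact: expR_ge0].
exact: (@hoeffding_fin R A (Pg t) (c t) M lam M0 (Pg_ge0 t) (Pg_sum t) (cM t)).
Qed.

Lemma Ptot : \sum_(x : {ffun 'I_T -> A}) \prod_t Pg t (x t) = 1.
Proof.
rewrite -(bigA_distr_bigA (fun t a => Pg t a)).
by rewrite big1 // => t _; apply: Pg_sum.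
Qed.
End Generic.


Lemma sum_sub (R : realType) (I : finType) (P Q : pred I) (F : I -> R) :
  (forall x, P x -> Q x) -> (forall x, 0 <= F x) ->
  \sum_(x | P x) F x <= \sum_(x | Q x) F x.
Proof.
move=> PQ F0.
rewrite [X in _ <= X](bigID P) /=.
have -> : \sum_(i | Q i && P i) F i = \sum_(i | P i) F i.
  apply: eq_bigl => x; case Px: (P x); last by rewrite andbF.
  by rewrite andbT PQ.
by rewrite lerDl; apply: sumr_ge0.
Qed.

Lemma finmin_ge (R : realType) (I : finType) (F : I -> R) (m : R) (x0 : I) :
  (forall a, m <= F a) -> m <= finmin F.
Proof.
move=> H; rewrite /finmin; case: pickP => [a _|/(_ x0)//].
apply: (big_ind (fun y => m <= y)) => //.
by move=> x y hx hy; rewrite le_min hx hy.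
Qed.

Theorem theorem1 (R : realType) (N : nat) (hN : (0 < N)%N)
  (Alev : 'I_N -> {fset R}) (hA : forall n, Alev n != fset0)
  (fR fV : 'I_N -> R -> R) (fT : 'I_N -> 'I_N -> R -> R)
  (hfR : forall n x, 0 < fR n x) (hfV : forall n x, 0 < fV n x)
  (hfT : forall n m x, 0 < fT n m x)
  (delta : ('I_N -> R) -> ('I_N -> R) -> 'I_N -> 'I_N -> R)
  (hdelta : forall (a : Act Alev) (b : 'I_N -> R),
      optimal_transfer fV fT (aval a) b (delta (aval a) b))
  (Theta : R) (hTheta : 0 < Theta)
  (hCR : forall a : Act Alev, `|CR fR a| <= Theta)
  (hCT : forall (a : Act Alev) b, `|CT fT delta a b| <= Theta)
  (hCV : forall (a : Act Alev) b, `|CV fV delta a b| <= Theta)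
  (T : nat) (hT : (0 < T)%N) (bs : 'I_T -> ('I_N -> R))
  (dl : R) (hdl0 : 0 < dl) (hdl1 : dl < 1) :
  let eta := Num.sqrt (ln (#|Act Alev|%:R) / T%:R) in
  Prob fR fV fT delta bs eta
    (fun x : {ffun 'I_T -> Act Alev} => regret fR fV fT delta bs x <=
        (9 * Theta ^+ 2 / 8 + 1) * Num.sqrt (T%:R * ln (#|Act Alev|%:R))
        + 3 * Theta * Num.sqrt (2^-1 * ln dl^-1 * T%:R))
  >= 1 - dl.
Proof.
cbv zeta.
set eta := Num.sqrt (ln (#|Act Alev|%:R) / T%:R).
pose A := Act Alev.
have a0 : A.
  have h n : {x : R | x \in Alev n}.
    by exists (xchoose (elimT (fset0Pn (Alev n)) (hA n))); exact: xchooseP.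
  exact: [ffun n => FSetSub (svalP (h n))].
pose c := fun (t : 'I_T) (a : A) => Cost fR fV fT delta a (bs t).
pose M := 3 * Theta.
have M0 : 0 < M by rewrite /M; lra.
have cM : forall t a, 0 <= c t a <= M.
  move=> t a; rewrite /c /Cost.
  have r0 : 0 <= CR fR a by apply: sumr_ge0 => n _; apply: ltW.
  have v0 : 0 <= CV fV delta a (bs t) by apply: sumr_ge0 => n _; apply: ltW.
  have t0 : 0 <= CT fT delta a (bs t).
    by apply: sumr_ge0 => n _; apply: sumr_ge0 => m _; apply: ltW.
  have r1 := le_trans (ler_norm _) (hCR a).
  have v1 := le_trans (ler_norm _) (hCV a (bs t)).
  have t1 := le_trans (ler_norm _) (hCT a (bs t)).
  apply/andP; split; rewrite /M; lra.
pose P := Pg R A T c eta.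
pose p := pg R A T c eta.
pose B := (9 * Theta ^+ 2 / 8 + 1) * Num.sqrt (T%:R * ln (#|A|%:R)).
pose eps := 3 * Theta * Num.sqrt (2^-1 * ln dl^-1 * T%:R).
have T0 : 0 < (T%:R : R) by rewrite ltr0n.
have cardA : (0 < #|A|)%N by apply/card_gt0P; exists a0.
have l0 : 0 <= ln (#|A|%:R : R) by apply: ln_ge0; rewrite ler1n.
have key : forall a, \sum_t p t - B <= \sum_t c t a.
  move=> a.
  have [lz|lp] := eqVneq (ln (#|A|%:R : R)) 0.
    have A1 : #|A| = 1%N.
      move/eqP: lz; rewrite ln_eq0 ?ltr0n // pnatr_eq1 => /eqP //.
    have allA : forall b : A, b = a.
      move=> b; have /card_le1_eqP H : (#|A| <= 1)%N by rewrite A1.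
      exact: H.
    have -> : \sum_t p t = \sum_t c t a.
      apply: eq_bigr => t _; rewrite /p /pg.
      rewrite (eq_bigr (fun b => Pg R A T c eta t b * c t a)); last by move=> b _; rewrite (allA b).
      by rewrite -mulr_suml (@Pg_sum R A T c eta a0 t) mul1r.
    by rewrite /B lz mulr0 sqrtr0 mulr0 subr0.
  have lp' : 0 < ln (#|A|%:R : R) by rewrite lt0r lp l0.
  have e0 : 0 < eta by rewrite sqrtr_gt0; apply: divr_gt0.
  have e2 : eta ^+ 2 = ln (#|A|%:R : R) / T%:R by rewrite sqr_sqrtr // divr_ge0 // ltW.
  have eB : eta * Num.sqrt (T%:R * ln (#|A|%:R : R)) = ln (#|A|%:R : R).
    rewrite -sqrtrM; last by apply: divr_ge0 => //; apply: ltW.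
    have -> : ln (#|A|%:R : R) / T%:R * (T%:R * ln #|A|%:R) = ln (#|A|%:R : R) ^+ 2.
      by field; apply: lt0r_neq0.
    by rewrite sqrtr_sqr ger0_norm.
  have H := @hedge R A T c M eta M0 cM a0 a.
  have H2 : eta * (\sum_t p t - \sum_t c t a) <= eta * B.
    apply: (le_trans H).
    rewrite /B [eta * (_ * _)]mulrCA eB e2 /M.
    rewrite le_eqVlt; apply/orP; left; apply/eqP.
    by field; apply: lt0r_neq0.
  rewrite ler_pM2l // in H2.
  lra.
pose S := fun x : {ffun 'I_T -> A} => \sum_t c t (x t) - \sum_t p t.
pose G := fun x : {ffun 'I_T -> A} => S x <= eps.
pose E := fun x : {ffun 'I_T -> A} => regret fR fV fT delta bs x <= B + eps.
have sub : \sum_(x : {ffun 'I_T -> A} | G x) \prod_t P t (x t) <= \sum_(x : {ffun 'I_T -> A} | E x) \prod_t P t (x t).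
  apply: sum_sub; last by move=> x; apply: prodr_ge0 => t _; apply: (@Pg_ge0 R A T c eta a0).
  move=> x hG; rewrite /E /regret.
  have hm := @finmin_ge R A (fun a : A => \sum_t c t a) (\sum_t p t - B) a0 key.
  change (\sum_t c t (x t) - finmin (fun a : A => \sum_t c t a) <= B + eps).
  move: hG; rewrite /G /S; lra.
have Ldl : 0 < ln dl^-1 by apply: ln_gt0; rewrite invf_gt1.
pose s := Num.sqrt (2^-1 * ln dl^-1 * T%:R).
have s2 : s ^+ 2 = 2^-1 * ln dl^-1 * T%:R.
  by rewrite sqr_sqrtr //; apply: mulr_ge0; [apply: mulr_ge0; [lra | exact: ltW] | exact: ltW].
have s0 : 0 < s by rewrite sqrtr_gt0; apply: mulr_gt0; [apply: mulr_gt0; lra | exact: T0].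
have eps0 : 0 < eps by rewrite /eps -/s; apply: mulr_gt0 => //; lra.
pose lam := 4 * eps / (T%:R * M ^+ 2).
have lam0 : 0 < lam by rewrite /lam; apply: divr_gt0; [lra | apply: mulr_gt0 => //; apply: exprn_gt0].
have bad := @conc R A T c M eta M0 cM a0 lam eps lam0.
have ex : - (lam * eps) + T%:R * (lam ^+ 2 * M ^+ 2 / 8) = - ln dl^-1.
  have -> : - (lam * eps) + T%:R * (lam ^+ 2 * M ^+ 2 / 8) = - (2 * s ^+ 2 / T%:R).
    rewrite /lam /eps -/s /M; field.
    by apply/andP; split; apply: lt0r_neq0.
  by rewrite s2; field; apply: lt0r_neq0.
rewrite ex lnV ?posrE // opprK lnK ?posrE // in bad.
have tot := @Ptot R A T c eta a0.
rewrite (bigID G) /= in tot.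
have eqb : \sum_(i : {ffun 'I_T -> A} | true && ~~ G i) \prod_t Pg R A T c eta t (i t) =
    \sum_(x : {ffun 'I_T -> A} | eps < \sum_t c t (x t) - \sum_t pg R A T c eta t) \prod_t Pg R A T c eta t (x t).
  by apply: eq_bigl => x; rewrite /G /S ltNge.
rewrite eqb in tot.
have main : 1 - dl <= \sum_(x | G x) \prod_t P t (x t).
  have -> : \sum_(x | G x) \prod_t P t (x t) = \sum_(i : {ffun 'I_T -> A} | true && G i) \prod_t Pg R A T c eta t (i t) by [].
  lra.
exact: le_trans main sub.
Qed.
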